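(* A $\mathbb{B}$-topological space $(X,\tau)$ is regular if and only if both topological spaces $(X,\tau[tt])$ and $(X,\tau[ff])$ are regular. In particular, for every topological space $(X,\mathcal{T})$, the $\mathbb{B}$-topological space $\omega(X,\mathcal{T})$ is regular if and only if $(X,\mathcal{T})$ is regular.
   Context: $\mathbb{B}=\{0,1,tt,ff\}$ is the four-element Boolean algebra with bottom $0$, top $1$, and $tt,ff$ incomparable complements; $\neg$ its complement. A $\mathbb{B}$-topology on $X$ is $\tau\subseteq\mathbb{B}^X$ containing all constant maps and closed under arbitrary pointwise joins and finite pointwise meets; $\mu$ is closed if $\neg\mu\in\tau$; $\overline{\mu}$ is the pointwise meet of all closed sets $\ge\mu$. $\tau[b]=\{\lambda[b]:\lambda\in\tau\}$ with $\lambda[b]=\{x:\lambda(x)\ge b\}$. $(X,\tau)$ is regular if for every $\lambda\in\tau$, $\lambda=\bigvee\{\mu\in\tau:\overline{\mu}\le\lambda\}$. For a topological space $(X,\mathcal{T})$, $\omega(\mathcal{T})=\{\lambda\in\mathbb{B}^X:\lambda[tt]\in\mathcal{T},\lambda[ff]\in\mathcal{T}\}$ and $\omega(X,\mathcal{T})=(X,\omega(\mathcal{T}))$. A topological space is regular if every neighbourhood of a point contains a closed neighbourhood of that point (no $T_1$ assumption). *)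

(* Defs.v *)
Inductive B4 : Type := B0 | B1 | Btt | Bff.

Definition leB (a b : B4) : Prop :=
  a = B0 \/ b = B1 \/ a = b.

Definition negB (a : B4) : B4 :=
  match a with B0 => B1 | B1 => B0 | Btt => Bff | Bff => Btt end.

Definition meetB (a b : B4) : B4 :=
  match a, b with
  | B1, c => c
  | c, B1 => c
  | Btt, Btt => Btt
  | Bff, Bff => Bff
  | _, _ => B0
  end.

Definition isLUB (A : B4 -> Prop) (b : B4) : Prop :=
  (forall a, A a -> leB a b) /\ (forall c, (forall a, A a -> leB a c) -> leB b c).
Definition isGLB (A : B4 -> Prop) (b : B4) : Prop :=
  (forall a, A a -> leB b a) /\ (forall c, (forall a, A a -> leB c a) -> leB c b).

Definition leF {X : Type} (f g : X -> B4) : Prop := forall x, leB (f x) (g x).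

Definition is_join {X : Type} (S : (X -> B4) -> Prop) (mu : X -> B4) : Prop :=
  forall x, isLUB (fun a => exists l, S l /\ l x = a) (mu x).

Definition is_Btopology {X : Type} (tau : (X -> B4) -> Prop) : Prop :=
  (forall b : B4, tau (fun _ => b)) /\
  (forall S mu, (forall l, S l -> tau l) -> is_join S mu -> tau mu) /\
  (forall l m, tau l -> tau m -> tau (fun x => meetB (l x) (m x))).

Definition Bclosed {X : Type} (tau : (X -> B4) -> Prop) (mu : X -> B4) : Prop :=
  tau (fun x => negB (mu x)).

Definition is_Bclosure {X : Type} (tau : (X -> B4) -> Prop) (mu c : X -> B4) : Prop :=
  forall x, isGLB (fun a => exists nu, Bclosed tau nu /\ leF mu nu /\ nu x = a) (c x).

Definition Bregular {X : Type} (tau : (X -> B4) -> Prop) : Prop :=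
  forall l, tau l ->
    is_join (fun m => tau m /\ exists c, is_Bclosure tau m c /\ leF c l) l.

Definition level {X : Type} (l : X -> B4) (b : B4) : X -> Prop :=
  fun x => leB b (l x).

(** tau[b] = { lambda[b] | lambda in tau } (as a predicate on subsets,
    up to extensional equality of subsets). *)
Definition cut {X : Type} (tau : (X -> B4) -> Prop) (b : B4) : (X -> Prop) -> Prop :=
  fun U => exists l, tau l /\ forall x, U x <-> level l b x.

Definition is_topology {X : Type} (T : (X -> Prop) -> Prop) : Prop :=
  T (fun _ => False) /\ T (fun _ => True) /\
  (forall F : (X -> Prop) -> Prop, (forall U, F U -> T U) ->
     T (fun x => exists U, F U /\ U x)) /\
  (forall U V, T U -> T V -> T (fun x => U x /\ V x)).

Definition nbhd {X : Type} (T : (X -> Prop) -> Prop) (N : X -> Prop) (x : X) : Prop :=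
  exists V, T V /\ V x /\ forall y, V y -> N y.

(** Regular topological space (no T1 assumption): every neighbourhood of a
    point contains a closed neighbourhood of that point. *)
Definition Tregular {X : Type} (T : (X -> Prop) -> Prop) : Prop :=
  forall (x : X) (N : X -> Prop), nbhd T N x ->
    exists C, T (fun y => ~ C y) /\ nbhd T C x /\ forall y, C y -> N y.

Definition omega {X : Type} (T : (X -> Prop) -> Prop) : (X -> B4) -> Prop :=
  fun l => T (level l Btt) /\ T (level l Bff).

(* Main.v *)
Require Import Defs.
From Stdlib Require Import Setoid Classical ClassicalEpsilon FunctionalExtensionality PropExtensionality.

Ltac bs_solve := unfold leB in *; intuition (try discriminate; try reflexivity; auto).

Definition bs (b : B4) := b = Btt \/ b = Bff.

Definition mk (p q : Prop) : B4 :=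
  if excluded_middle_informative p then
    (if excluded_middle_informative q then B1 else Btt)
  else (if excluded_middle_informative q then Bff else B0).

Lemma mk_tt p q : leB Btt (mk p q) <-> p.
Proof. unfold mk; destruct (excluded_middle_informative p), (excluded_middle_informative q); bs_solve. Qed.
Lemma mk_ff p q : leB Bff (mk p q) <-> q.
Proof. unfold mk; destruct (excluded_middle_informative p), (excluded_middle_informative q); bs_solve. Qed.

Lemma leB_refl a : leB a a.
Proof. bs_solve. Qed.
Lemma leB_trans a c d : leB a c -> leB c d -> leB a d.
Proof. destruct a, c, d; bs_solve. Qed.
Lemma leB_comp a c : leB a c <-> ((leB Btt a -> leB Btt c) /\ (leB Bff a -> leB Bff c)).
Proof. destruct a, c; bs_solve. Qed.
Lemma leB_comp_b b a c : bs b ->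
  (leB a c <-> ((leB b a -> leB b c) /\ (leB (negB b) a -> leB (negB b) c))).
Proof. intros [-> | ->]; simpl; rewrite leB_comp; tauto. Qed.
Lemma bs_neg b : bs b -> bs (negB b).
Proof. unfold bs; intros [-> | ->]; simpl; auto. Qed.
Lemma lv_meet b a c : bs b -> (leB b (meetB a c) <-> leB b a /\ leB b c).
Proof. intros [-> | ->]; destruct a, c; simpl; bs_solve. Qed.
Lemma lv_neg b a : bs b -> (leB b (negB a) <-> ~ leB b a).
Proof. intros [-> | ->]; destruct a; simpl; bs_solve. Qed.
Lemma negB_inv a : negB (negB a) = a.
Proof. destruct a; reflexivity. Qed.
Lemma lv_bad b : bs b -> ~ leB (negB b) b.
Proof. intros [-> | ->]; simpl; bs_solve. Qed.
Lemma meet_le b a : leB (meetB a b) b.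
Proof. destruct a, b; simpl; bs_solve. Qed.

Lemma lub_char A m : isLUB A m <-> forall b, bs b -> (leB b m <-> exists a, A a /\ leB b a).
Proof.
  split.
  - intros [Hu Hl] b Hb; split.
    + intro Hbm. apply NNPP; intro Hn.
      assert (H : forall a, A a -> leB a (negB b)).
      { intros a Ha. destruct (classic (leB b a)) as [h|h]; [exfalso; apply Hn; eauto|].
        destruct Hb; subst; destruct a; simpl; bs_solve. }
      apply Hl in H. destruct Hb; subst; destruct m; simpl in *; bs_solve.
    + intros [a [Ha h]]. eapply leB_trans; eauto.
  - intros H; split.
    + intros a Ha; apply leB_comp; split; intro h; apply H; unfold bs; eauto.
    + intros c Hc; apply leB_comp; split; intro h; apply H in h; try (unfold bs; auto);
      destruct h as [a [Ha h]]; eapply leB_trans; eauto.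
Qed.

Lemma glb_char A m : isGLB A m <-> forall b, bs b -> (leB b m <-> forall a, A a -> leB b a).
Proof.
  split.
  - intros [Hl Hg] b Hb; split.
    + intros h a Ha; eapply leB_trans; eauto.
    + intro h; apply Hg; auto.
  - intros H; split.
    + intros a Ha; apply leB_comp; split; intro h; eapply H; eauto; unfold bs; auto.
    + intros c Hc; apply leB_comp; split; intro h; apply H; try (unfold bs; auto);
      intros a Ha; eapply leB_trans; eauto.
Qed.

Definition joinF {X} (S : (X -> B4) -> Prop) (x : X) : B4 :=
  mk (exists l, S l /\ leB Btt (l x)) (exists l, S l /\ leB Bff (l x)).

Lemma level_join {X} (S : (X -> B4) -> Prop) mu b : bs b -> is_join S mu ->
  forall x, leB b (mu x) <-> exists l, S l /\ leB b (l x).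
Proof.
  intros Hb J x. rewrite (proj1 (lub_char _ _) (J x) b Hb). split.
  - intros [a [[l [Hl <-]] h]]; eauto.
  - intros [l [Hl h]]; eauto.
Qed.

Lemma joinF_join {X} (S : (X -> B4) -> Prop) : is_join S (joinF S).
Proof.
  intro x; apply lub_char; intros b [-> | ->]; unfold joinF;
  [rewrite mk_tt | rewrite mk_ff]; split;
  [intros [l [Hl h]]; eauto | intros [a [[l [Hl <-]] h]]; eauto
  |intros [l [Hl h]]; eauto | intros [a [[l [Hl <-]] h]]; eauto].
Qed.

Definition closF {X} (tau : (X -> B4) -> Prop) (m : X -> B4) (x : X) : B4 :=
  mk (forall nu, Bclosed tau nu -> leF m nu -> leB Btt (nu x))
     (forall nu, Bclosed tau nu -> leF m nu -> leB Bff (nu x)).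

Lemma closure_level {X} (tau : (X -> B4) -> Prop) m c b x : is_Bclosure tau m c -> bs b ->
  (leB b (c x) <-> forall nu, Bclosed tau nu -> leF m nu -> leB b (nu x)).
Proof.
  intros Hc Hb. rewrite (proj1 (glb_char _ _) (Hc x) b Hb). split.
  - intros h nu H1 H2; apply h; eauto.
  - intros h a [nu [H1 [H2 <-]]]; auto.
Qed.

Lemma closF_is {X} (tau : (X -> B4) -> Prop) m : is_Bclosure tau m (closF tau m).
Proof.
  intro x; apply glb_char; intros b [-> | ->]; unfold closF;
  [rewrite mk_tt | rewrite mk_ff]; split;
  [intros h a [nu [H1 [H2 <-]]]; auto | intros h nu H1 H2; apply h; eauto
  |intros h a [nu [H1 [H2 <-]]]; auto | intros h nu H1 H2; apply h; eauto].
Qed.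

Lemma closF_level {X} (tau : (X -> B4) -> Prop) m b y : bs b ->
  (leB b (closF tau m y) <-> forall nu, Bclosed tau nu -> leF m nu -> leB b (nu y)).
Proof. intro Hb; apply closure_level; auto; apply closF_is. Qed.

Lemma le_closure {X} (tau : (X -> B4) -> Prop) m c : is_Bclosure tau m c -> leF m c.
Proof. intros Hc x. apply (proj2 (Hc x)). intros a [nu [_ [Hle <-]]]. apply Hle. Qed.

Lemma reg_to_T {X} (tau : (X -> B4) -> Prop) b :
  is_Btopology tau -> Bregular tau -> bs b -> Tregular (cut tau b).
Proof.
  intros [Hc [Hj Hm]] Hreg Hb x N [V [[l [Hl HV]] [Vx VN]]].
  pose proof (Hreg l Hl) as J.
  assert (H : leB b (l x)) by (apply HV; auto).
  destruct (proj1 (level_join _ _ _ Hb J x) H) as [m [[Hmt [c [Hcl Hcle]]] hm]].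
  set (S := fun k => exists nu, Bclosed tau nu /\ leF m nu /\ k = fun y => negB (nu y)).
  exists (fun y => forall nu, Bclosed tau nu -> leF m nu -> leB b (nu y)).
  split; [|split].
  - exists (joinF S). split.
    + apply Hj with S; [intros k [nu [Hnu [_ ->]]]; exact Hnu | apply joinF_join].
    + intro y. unfold level. rewrite (level_join _ _ _ Hb (joinF_join S) y). split.
      * intro h. apply not_all_ex_not in h. destruct h as [nu h].
        apply imply_to_and in h; destruct h as [H1 h].
        apply imply_to_and in h; destruct h as [H2 h].
        exists (fun y => negB (nu y)); split; [exists nu; auto|]. apply lv_neg; auto.
      * intros [k [[nu [Hnu [Hle ->]]] hk]] H'. apply (lv_neg b (nu y) Hb) in hk.
        apply hk, H'; auto.
  - exists (level m b). split; [exists m; split; auto; intro; tauto|split; [exact hm|]].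
    intros y hy nu Hnu Hle. eapply leB_trans; [exact hy| apply Hle].
  - intros y hy. apply VN, HV. unfold level. apply leB_trans with (c y); [|apply Hcle].
    apply (closure_level tau m c b y Hcl Hb). auto.
Qed.

Lemma key {X} (tau : (X -> B4) -> Prop) b l x :
  is_Btopology tau -> bs b -> Tregular (cut tau b) -> tau l -> leB b (l x) ->
  exists m, (tau m /\ exists c, is_Bclosure tau m c /\ leF c l) /\ leB b (m x).
Proof.
  intros [Hc [Hj Hm]] Hb Treg Hl hx.
  destruct (Treg x (level l b)) as [C [[k' [Hk' HC']] [[V [[k [Hk HV]] [Vx VC]]] CN]]].
  { exists (level l b); split; [exists l; split; auto; intro; tauto | split; auto]. }
  set (m := fun y => meetB (k y) b).
  exists m. split; [split|].
  - apply Hm; auto.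
  - exists (closF tau m). split; [apply closF_is|]. intro y. apply (leB_comp_b b); auto.
    split.
    + intro h. rewrite (closF_level tau m b y Hb) in h.
      set (nu := fun z => negB (meetB (k' z) b)).
      assert (Hcl : Bclosed tau nu).
      { unfold Bclosed, nu.
        replace (fun z => negB (negB (meetB (k' z) b))) with (fun z => meetB (k' z) b)
          by (apply functional_extensionality; intro; rewrite negB_inv; reflexivity).
        apply Hm; auto. }
      assert (Hle : leF m nu).
      { intro z. apply (leB_comp_b b); auto. split.
        - intro hz. unfold m in hz. apply lv_meet in hz; auto. destruct hz as [hz _].
          unfold nu. apply lv_neg; auto. intro hz'. apply lv_meet in hz'; auto.
          destruct hz' as [hz' _].
          assert (Cz : C z) by (apply VC, HV; exact hz).
          apply (proj2 (HC' z)) in hz'. contradiction.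
        - intro hz. unfold m in hz. apply lv_meet in hz; [|apply bs_neg; auto].
          destruct hz as [_ hz]. exfalso; apply (lv_bad b Hb hz). }
      specialize (h nu Hcl Hle). unfold nu in h. apply lv_neg in h; auto.
      assert (Cy : C y).
      { apply NNPP; intro hn. apply h. apply lv_meet; auto. split; [apply HC'; auto | apply leB_refl]. }
      apply CN; auto.
    + intro h. rewrite (closF_level tau m (negB b) y (bs_neg b Hb)) in h.
      exfalso. apply (lv_bad b Hb). apply (h (fun _ => b)).
      * unfold Bclosed. apply Hc.
      * intro z; unfold m; apply meet_le.
  - unfold m. apply lv_meet; auto. split; [apply HV; auto | apply leB_refl].
Qed.

Lemma T_to_reg {X} (tau : (X -> B4) -> Prop) :
  is_Btopology tau -> Tregular (cut tau Btt) -> Tregular (cut tau Bff) -> Bregular tau.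
Proof.
  intros Htop Ht Hf l Hl x. apply lub_char. intros b Hb. split.
  - intro h. assert (Treg : Tregular (cut tau b)) by (destruct Hb; subst; auto).
    destruct (key tau b l x Htop Hb Treg Hl h) as [m [Fm hm]].
    exists (m x); split; [exists m; auto | exact hm].
  - intros [a [[m [[Hmt [c [Hcl Hcle]]] <-]] h]].
    eapply leB_trans; [exact h|]. eapply leB_trans; [apply (le_closure tau m c Hcl)| apply Hcle].
Qed.

Lemma part1 : forall (X : Type) (tau : (X -> B4) -> Prop),
      is_Btopology tau ->
      (Bregular tau <-> (Tregular (cut tau Btt) /\ Tregular (cut tau Bff))).
Proof.
  intros X tau Ht; split.
  - intro; split; apply reg_to_T; auto; unfold bs; auto.
  - intros [? ?]; apply T_to_reg; auto.
Qed.

Lemma T_const {X} (T : (X -> Prop) -> Prop) : is_topology T -> forall P : Prop, T (fun _ => P).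
Proof.
  intros [H0 [H1 _]] P. destruct (classic P) as [p|p].
  - replace (fun _ : X => P) with (fun _ : X => True); auto.
    apply functional_extensionality; intro; apply propositional_extensionality; tauto.
  - replace (fun _ : X => P) with (fun _ : X => False); auto.
    apply functional_extensionality; intro; apply propositional_extensionality; tauto.
Qed.

Lemma omega_lv {X} (T : (X -> Prop) -> Prop) l b : bs b -> omega T l -> T (level l b).
Proof. intros [-> | ->] [H1 H2]; auto. Qed.

Lemma omega_top {X} (T : (X -> Prop) -> Prop) : is_topology T -> is_Btopology (omega T).
Proof.
  intros HT. pose proof HT as [H0 [H1 [HU HI]]].
  assert (G : forall l, (forall b, bs b -> T (level l b)) -> omega T l).
  { intros l h; split; apply h; unfold bs; auto. }
  split; [|split].
  - intro c. apply G; intros b _. unfold level. apply T_const; auto.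
  - intros S mu HS J. apply G; intros b Hb.
    replace (level mu b) with
      (fun x => exists U, (fun U => exists l, S l /\ U = level l b) U /\ U x).
    + apply HU. intros U [l [Hl ->]]. apply omega_lv; auto.
    + apply functional_extensionality; intro x; apply propositional_extensionality.
      unfold level at 1. rewrite (level_join S mu b Hb J x). split.
      * intros [U [[l [Hl ->]] h]]; eauto.
      * intros [l [Hl h]]; exists (level l b); eauto.
  - intros l m Hl Hm. apply G; intros b Hb.
    replace (level (fun x => meetB (l x) (m x)) b) with
      (fun x => level l b x /\ level m b x).
    + apply HI; apply omega_lv; auto.
    + apply functional_extensionality; intro x; apply propositional_extensionality.
      unfold level. rewrite lv_meet; auto. tauto.
Qed.

Lemma cut_omega {X} (T : (X -> Prop) -> Prop) b : is_topology T -> bs b -> cut (omega T) b = T.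
Proof.
  intros HT Hb. pose proof HT as [H0 _].
  apply functional_extensionality; intro U; apply propositional_extensionality; split.
  - intros [l [Hl HU]].
    replace U with (level l b); [apply omega_lv; auto|].
    apply functional_extensionality; intro; apply propositional_extensionality; symmetry; auto.
  - intro HU. destruct Hb; subst.
    + exists (fun y => mk (U y) False).
      assert (E1 : level (fun y => mk (U y) False) Btt = U)
        by (apply functional_extensionality; intro; apply propositional_extensionality; apply mk_tt).
      assert (E2 : level (fun y => mk (U y) False) Bff = (fun _ => False))
        by (apply functional_extensionality; intro; apply propositional_extensionality; apply mk_ff).
      split; [split; [rewrite E1 | rewrite E2]; auto|]. rewrite E1; tauto.
    + exists (fun y => mk False (U y)).
      assert (E1 : level (fun y => mk False (U y)) Bff = U)
        by (apply functional_extensionality; intro; apply propositional_extensionality; apply mk_ff).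
      assert (E2 : level (fun y => mk False (U y)) Btt = (fun _ => False))
        by (apply functional_extensionality; intro; apply propositional_extensionality; apply mk_tt).
      split; [split; [rewrite E2 | rewrite E1]; auto|]. rewrite E1; tauto.
Qed.

Theorem mainTheorem17 :
  (forall (X : Type) (tau : (X -> B4) -> Prop),
      is_Btopology tau ->
      (Bregular tau <-> (Tregular (cut tau Btt) /\ Tregular (cut tau Bff)))) /\
  (forall (X : Type) (T : (X -> Prop) -> Prop),
      is_topology T ->
      (Bregular (omega T) <-> Tregular T)).
Proof.
  split; [exact part1|].
  intros X T HT. rewrite (part1 X (omega T) (omega_top T HT)).
  rewrite !cut_omega; unfold bs; auto. tauto.
Qed.
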